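(* If a BKL-word $w$ arises from a Rampichini diagram by reading the labels along some vertical line, then there exists another Rampichini diagram in which reading the labels along the right edge of the square (respectively, along the left edge) gives $w$.
   Context: A Rampichini diagram is a link diagram in a square with opposite sides identified (a diagram of a link in the thickened torus) whose arcs are labeled by transpositions in $S_n$, satisfying: (1) the diagram has no horizontal or vertical tangencies, so every horizontal line meets it in the same number of points, which is $n-1$; (2) if $\tau_1,\dots,\tau_{n-1}$ are the labels of the arcs met along the bottom edge from left to right, then $\tau_1\tau_2\cdots\tau_{n-1}=(1\,2\,\cdots\,n)$; (3) the labels on the top edge equal those on the bottom edge; (4) if an arc meeting the right edge has label $(i\ j)$, the corresponding arc on the left edge has label $(i-1\ j-1)$, indices mod $n$; (5) at every crossing, if the overcrossing strand has label $\sigma$ and the undercrossing strand has label $\rho$ on one side, then on the other side the undercrossing strand has label $\sigma\rho\sigma$ (the overcrossing label is unchanged). BKL (band) generators of the braid group $\mathbb{B}_n$: $a_{i,j}$ for $1\le i<j\le n$, $a_{i,j}=(\sigma_{j-1}\cdots\sigma_{i+1})\sigma_i(\sigma_{j-1}\cdots\sigma_{i+1})^{-1}$. The word read along a vertical line (avoiding crossings) is obtained by listing the intersection points from bottom to top and writing $a_{i,j}$ for an intersection with an arc labeled $(i\ j)$ that crosses the line from left to right (going upward), and $a_{i,j}^{-1}$ if it crosses from right to left. *)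

(* Defs.v *)
(* Combinatorial ("vertical sweep") model of Rampichini diagrams. *)
From mathcomp Require Import all_boot all_order all_algebra all_fingroup.
Set Implicit Arguments. Unset Strict Implicit. Unset Printing Implicit Defensive.
Import Order.TTheory GRing.Theory Num.Theory.

(* Indices 1..n of the paper are 'I_n = {0..n-1} here (shift by one). *)

(* The n-cycle (1 2 ... n), i.e. k |-> k+1 mod n. *)
Definition cyc (n : nat) : {perm 'I_n} := perm (@ordS_inj n).

(* An intersection point of a vertical line with the diagram:
   ((i, j), d) with i < j, carrying the label (i j), and d = true iff the arc
   crosses the line from left to right going upward (positive slope).
   The BKL letter read at this point is a_{i,j} if d, a_{i,j}^{-1} otherwise. *)
Definition pt (n : nat) := ('I_n * 'I_n * bool)%type.
Definition wf_pt n (p : pt n) : bool := (p.1.1 < p.1.2)%N.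
Definition label n (p : pt n) : {perm 'I_n} := tperm p.1.1 p.1.2.
Definition dir n (p : pt n) : bool := p.2.

(* BKL letters: (i, j, b) with i < j stands for a_{i,j}^{+1} if b, a_{i,j}^{-1} otherwise. *)
Definition bkl_letter (n : nat) := ('I_n * 'I_n * bool)%type.
Definition bkl_word (n : nat) (w : seq (bkl_letter n)) : bool :=
  all (fun l : bkl_letter n => (l.1.1 < l.1.2)%N) w.

Definition read_line n (s : seq (pt n)) : seq (bkl_letter n) := s.

(* A snapshot = a vertical line avoiding crossings: its points (bottom to top)
   and their heights in the open interval (0,1) (the square is [0,1]^2). *)
Definition snapshot (n : nat) := (seq (pt n) * seq rat)%type.

Definition valid_snapshot n (a : snapshot n) : Prop :=
  [/\ size a.1 = size a.2, all (@wf_pt n) a.1,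
      sorted (fun x y : rat => (x < y)%R) a.2 &
      all (fun x : rat => (0 < x < 1)%R) a.2].

Fixpoint moves (ds : seq bool) (ys zs : seq rat) : Prop :=
  match ds, ys, zs with
  | [::], [::], [::] => True
  | d :: ds', y :: ys', z :: zs' =>
      (if d then (y < z)%R else (z < y)%R) /\ moves ds' ys' zs'
  | _, _, _ => False
  end.

(* Events met by a vertical line sweeping from left to right. *)
Inductive event : Type :=
  | ECross of nat & bool
      (* crossing of the points at positions k, k+1 (from the bottom);
         the bool is true iff the strand coming from below is the over-strand *)
  | EWrapUp    (* the top point (positive) crosses the top/bottom edge *)
  | EWrapDown. (* the bottom point (negative) crosses the bottom/top edge *)

Definition is_wrap (e : event) : bool :=
  match e with ECross _ _ => false | _ => true end.

Definition step n (a : snapshot n) (e : event) (b : snapshot n) : Prop :=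
  match e with
  | ECross k lo =>
      exists (s1 s2 : seq (pt n)) (p q p' q' : pt n)
             (y1 y2 z1 z2 : seq rat) (u1 u2 v1 v2 : rat),
      [/\ [/\ size s1 = k, size y1 = k & size z1 = k],
          a = (s1 ++ p :: q :: s2, y1 ++ u1 :: u2 :: y2),
          b = (s1 ++ q' :: p' :: s2, z1 ++ v1 :: v2 :: z2),
          (if lo then
             [/\ p' = p, label q' = (label p * label q * label p)%g & dir q' = dir q]
           else
             [/\ q' = q, label p' = (label q * label p * label q)%g & dir p' = dir p]) &
          [/\ moves (map (@dir n) s1) y1 z1, moves [:: dir p] [:: u1] [:: v2],
              moves [:: dir q] [:: u2] [:: v1] & moves (map (@dir n) s2) y2 z2]]
  | EWrapUp =>
      exists (s : seq (pt n)) (p : pt n) (y z : seq rat) (u v : rat),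
      [/\ a = (rcons s p, rcons y u), b = (p :: s, v :: z), dir p = true &
          moves (map (@dir n) s) y z]
  | EWrapDown =>
      exists (s : seq (pt n)) (p : pt n) (y z : seq rat) (u v : rat),
      [/\ a = (p :: s, u :: y), b = (rcons s p, rcons z v), dir p = false &
          moves (map (@dir n) s) y z]
  end.

(* Label of the arc crossing the bottom edge at a wrap event (1 otherwise). *)
Definition bot_label n (s : seq (pt n)) (e : event) : {perm 'I_n} :=
  match e with
  | EWrapUp => if rev s is p :: _ then label p else 1%g
  | EWrapDown => if s is p :: _ then label p else 1%g
  | ECross _ _ => 1%g
  end.

(* A diagram: snapshots s_0 (left edge), ..., s_K (right edge) and the
   events e_0, ..., e_{K-1} (e_i happens between s_i and s_{i+1}). *)
Record rdiag (n : nat) := RDiag { snaps : seq (snapshot n); evs : seq event }.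

Definition snap0 (n : nat) : snapshot n := ([::], [::]).
Definition left_edge n (D : rdiag n) : snapshot n := nth (snap0 n) (snaps D) 0.
Definition right_edge n (D : rdiag n) : snapshot n :=
  nth (snap0 n) (snaps D) (size (evs D)).

Definition is_rampichini n (D : rdiag n) : Prop :=
  [/\ [/\ size (snaps D) = (size (evs D)).+1,
      (forall i, (i < size (snaps D))%N -> valid_snapshot (nth (snap0 n) (snaps D) i))
    & (forall i, (i < size (evs D))%N ->
         step (nth (snap0 n) (snaps D) i) (nth EWrapUp (evs D) i)
              (nth (snap0 n) (snaps D) i.+1))],
      (* (1): the bottom edge meets the diagram in n-1 points *)
      count is_wrap (evs D) = n.-1,
      (\prod_(i < size (evs D))
          bot_label (nth (snap0 n) (snaps D) i).1 (nth EWrapUp (evs D) i))%g = cyc n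
    & (* (4): left and right edges are the same line, labels shifted by -1 *)
      (left_edge D).2 = (right_edge D).2 /\
      all2 (fun p q : pt n => (label p == (label q ^ (cyc n)^-1)%g) && (dir p == dir q))
           (left_edge D).1 (right_edge D).1].

Definition line_words n (D : rdiag n) : seq (seq (bkl_letter n)) :=
  [seq read_line s.1 | s <- snaps D].

(* Main.v *)
Require Import Defs.
From mathcomp Require Import all_boot all_order all_algebra all_fingroup.
Set Implicit Arguments. Unset Strict Implicit. Unset Printing Implicit Defensive.

Section Aux.
Variable n : nat.
Local Notation c := (cyc n).

Definition cpt (g : {perm 'I_n}) (p : pt n) : pt n :=
  let a := g p.1.1 in let b := g p.1.2 in
  (if (a < b)%N then (a, b) else (b, a), p.2).
Definition cs (g : {perm 'I_n}) (s : snapshot n) : snapshot n :=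
  (map (cpt g) s.1, s.2).

Lemma label_cpt g p : label (cpt g p) = (label p ^ g)%g.
Proof. by rewrite /label /cpt tpermJ; case: ifP => //= _; rewrite tpermC. Qed.

Lemma wf_cpt g p : wf_pt p -> wf_pt (cpt g p).
Proof.
move=> H; rewrite /wf_pt /cpt /=.
case: (ltngtP (g p.1.1) (g p.1.2)) => //= E.
have /perm_inj E' : g p.1.1 = g p.1.2 by apply: val_inj.
by move: H; rewrite /wf_pt E' ltnn.
Qed.

Lemma pt_eq (p q : pt n) : wf_pt p -> wf_pt q -> label p = label q ->
  dir p = dir q -> p = q.
Proof.
case: p => [[a b] d]; case: q => [[a' b'] d']; rewrite /wf_pt /label /dir /=.
move=> ab ab' E ->.
have ha : tperm a' b' a = b by rewrite -E tpermL.
move: ha; case: tpermP => [ea | eb | _ _] hb.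
- by rewrite ea hb.
- by move: ab ab'; rewrite eb -hb => h1 h2; move: (ltn_trans h1 h2); rewrite ltnn.
- by move: ab; rewrite hb ltnn.
Qed.

Lemma step_cs g a e b : step a e b -> step (cs g a) e (cs g b).
Proof.
case: e => [k lo | |] /=.
- case=> s1 [s2 [p [q [p' [q' [y1 [y2 [z1 [z2 [u1 [u2 [v1 [v2
         [[h1 h2 h3] ea eb hl [m1 m2 m3 m4]]]]]]]]]]]]]]].
  exists (map (cpt g) s1), (map (cpt g) s2), (cpt g p), (cpt g q),
    (cpt g p'), (cpt g q'), y1, y2, z1, z2, u1, u2, v1, v2.
  split.
  + by rewrite size_map.
  + by rewrite ea /cs /= map_cat.
  + by rewrite eb /cs /= map_cat.
  + case: lo hl => -[-> e1 e2]; split => //; rewrite !label_cpt e1 !conjMg //.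
  + by rewrite -!map_comp; split.
- case=> s [p [y [z [u [v [ea eb dp m]]]]]].
  exists (map (cpt g) s), (cpt g p), y, z, u, v.
  split => //; first by rewrite ea /cs /= map_rcons.
  + by rewrite eb.
  + by rewrite -map_comp.
- case=> s [p [y [z [u [v [ea eb dp m]]]]]].
  exists (map (cpt g) s), (cpt g p), y, z, u, v.
  split => //; first by rewrite ea.
  + by rewrite eb /cs /= map_rcons.
  + by rewrite -map_comp.
Qed.

Lemma bot_cs g s e : bot_label (map (cpt g) s) e = (bot_label s e ^ g)%g.
Proof.
case: e => [k lo | |] /=; first by rewrite conj1g.
- rewrite -map_rev; case: (rev s) => [|p r] /=; by rewrite ?conj1g ?label_cpt.
- case: s => [|p r] /=; by rewrite ?conj1g ?label_cpt.
Qed.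

Lemma valid_cs g a : valid_snapshot a -> valid_snapshot (cs g a).
Proof.
case=> h1 h2 h3 h4; split => //=; first by rewrite size_map.
by apply/allP => p /mapP [q /(allP h2) hq ->]; apply: wf_cpt.
Qed.

Definition R0 (p q : pt n) : bool :=
  (label p == (label q ^ c^-1)%g) && (dir p == dir q).

Lemma edge_fwd (s t : seq (pt n)) : all (@wf_pt n) s -> all (@wf_pt n) t ->
  all2 R0 s t -> t = map (cpt c) s.
Proof.
elim: s t => [|p s IH] [|q t] //= /andP [wp ws] /andP [wq wt] /andP [/andP [/eqP l /eqP d] a].
rewrite -(IH t) //; congr cons; apply: pt_eq => //; first exact: wf_cpt.
by rewrite label_cpt l conjgKV.
Qed.

Lemma edge_bwd (s t : seq (pt n)) : all (@wf_pt n) s -> all (@wf_pt n) t ->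
  all2 R0 s t -> s = map (cpt c^-1) t.
Proof.
elim: s t => [|p s IH] [|q t] //= /andP [wp ws] /andP [wq wt] /andP [/andP [/eqP l /eqP d] a].
rewrite -(IH t) //; congr cons; apply: pt_eq => //; first exact: wf_cpt.
by rewrite label_cpt l.
Qed.

Lemma all2_R0_map (s : seq (pt n)) : all2 R0 s (map (cpt c) s).
Proof. by elim: s => //= p s ->; rewrite /R0 label_cpt conjgK !eqxx. Qed.

Lemma all2_R0_conj (s t : seq (pt n)) : all2 R0 s t ->
  all2 R0 (map (cpt c^-1) s) (map (cpt c^-1) t).
Proof.
elim: s t => [|p s IH] [|q t] //= /andP [/andP [/eqP l /eqP d] a].
rewrite IH // /R0 !label_cpt l -!conjgM eqxx andbT /=; apply/eqP; exact: d.
Qed.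

Lemma ramp_conj D : is_rampichini D ->
  is_rampichini (RDiag (map (cs c^-1) (snaps D)) (evs D)).
Proof.
case: D => S E; case=> [[hs hv hst] hc hp [h2 ha]] /=.
have hS i : (i <= size E)%N -> (i < size S)%N by rewrite hs.
split; first split => /=.
- by rewrite size_map.
- move=> i; rewrite size_map => hi; rewrite (nth_map (snap0 n)) //.
  exact: valid_cs (hv i hi).
- move=> i hi; rewrite !(nth_map (snap0 n)) ?hS //; last exact: ltnW.
  exact: step_cs (hst i hi).
- done.
- rewrite (eq_bigr (fun i : 'I_(size E) => (bot_label (nth (snap0 n) S i).1
      (nth EWrapUp E i) ^ c^-1)%g)); last first.
    by move=> i _; rewrite (nth_map (snap0 n)) ?hS 1?ltnW // bot_cs.
  rewrite -conjg_prod /= hp; by rewrite /conjg invgK mulgV mulg1.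
- rewrite /left_edge /right_edge /=.
  rewrite (nth_map (snap0 n) (snap0 n)); last exact: hS.
  rewrite (nth_map (snap0 n) (snap0 n)); last exact: hS.
  split; first exact: h2.
  exact: all2_R0_conj ha.
Qed.

Lemma ramp_rot (s0 : snapshot n) ss e0 es :
  is_rampichini (RDiag (s0 :: ss) (e0 :: es)) ->
  is_rampichini (RDiag (rcons ss (cs c (nth (snap0 n) ss 0))) (rcons es e0)).
Proof.
case=> [[/= hs hv hst] hc hp [h2 ha]].
move: hs => [hs].
set x := cs c (nth (snap0 n) ss 0).
have v0 : valid_snapshot s0 by apply: (hv 0); rewrite /= hs.
have vK : valid_snapshot (nth (snap0 n) ss (size es)).
  by apply: (hv (size es).+1); rewrite /= hs.
have eK : nth (snap0 n) ss (size es) = cs c s0.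
  move: h2 ha; rewrite /left_edge /right_edge /= => h2 ha.
  case: v0 => _ w0 _ _; case: vK => _ wK _ _.
  case: (nth _ ss _) h2 ha wK => t1 t2 /= h2 ha wK.
  by rewrite /cs -h2 (edge_fwd w0 wK ha).
split; first split => /=.
- by rewrite !size_rcons hs.
- move=> i; rewrite size_rcons nth_rcons => hi.
  case: ifP => hi'; first by apply: (hv i.+1); rewrite /= ltnS.
  have -> : i == size ss by rewrite eqn_leq -ltnS hi leqNgt hi'.
  by apply: valid_cs; apply: (hv 1); rewrite /= hs.
- move=> i; rewrite size_rcons !nth_rcons => hi.
  case: (ltnP i (size es)) => hi'.
  + rewrite hs ltnS (ltnW hi') ltnS hi'.
    by apply: (hst i.+1); rewrite /= ltnS.
  + have ei : i = size es by apply/eqP; rewrite eqn_leq -ltnS hi.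
    rewrite ei hs ltnSn ltnn eqxx eK /x.
    have := hst 0 isT; rewrite /= => h0.
    rewrite eqxx; exact: step_cs h0.
- by rewrite /= -cats1 count_cat /= addn0 addnC.
- move: hp; rewrite /= big_ord_recl /= => hp.
  rewrite /= size_rcons big_ord_recr /=.
  rewrite (eq_bigr (fun i : 'I_(size es) =>
      bot_label (nth (snap0 n) ss (0 + i)).1 (nth EWrapUp es (0 + i)))); last first.
    by move=> i _; rewrite add0n !nth_rcons hs ltnS ltnW // ltn_ord.
  move: hp; set B0 := bot_label s0.1 e0 => hp.
  rewrite !nth_rcons hs ltnSn ltnn eK bot_cs.
  have -> : (\prod_(i < size es)
      bot_label (nth (snap0 n) ss (0 + i)).1 (nth EWrapUp es (0 + i)))%g =
      (B0^-1 * c)%g by rewrite -hp mulKg.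
  by rewrite conjgE !mulgA mulgK eqxx mulVg mul1g.
- rewrite /left_edge /right_edge /= !nth_rcons size_rcons hs /= ltnn eqxx.
  split => //.
  exact: all2_R0_map.
Qed.

Lemma left_version m : forall D : rdiag n, is_rampichini D ->
  (m < size (snaps D))%N ->
  exists D' : rdiag n, is_rampichini D' /\
     left_edge D' = nth (snap0 n) (snaps D) m.
Proof.
elim: m => [|m IH] D hD hm; first by exists D.
case: D hD hm => [[|s0 ss] [|e0 es]] hD hm //=.
- by case: hD => [[/= hs _ _] _ _ _]; move: hm; rewrite /= hs.
- have hD1 := ramp_rot hD.
  case: hD => [[/= [hs] _ _] _ _ _].
  case: (IH _ hD1) => [| D' [h1 h2]]; first by rewrite /= size_rcons ltnS ltnW.
  by exists D'; split => //; rewrite h2 /= nth_rcons; move: hm; rewrite /= ltnS => ->.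
Qed.

End Aux.

Theorem lemma4p2 (n : nat) (D : rdiag n) (w : seq (bkl_letter n)) :
  is_rampichini D -> w \in line_words D ->
  (exists D' : rdiag n, is_rampichini D' /\ read_line (right_edge D').1 = w) /\
  (exists D' : rdiag n, is_rampichini D' /\ read_line (left_edge D').1 = w).
Proof.
move=> hD /mapP [s /(nthP (snap0 n)) [m hm es] ->].
have [D' [hD' hl]] := left_version hD hm.
split; last by exists D'; rewrite hl es.
exists (RDiag (map (cs (cyc n)^-1) (snaps D')) (evs D')).
split; first exact: ramp_conj.
case: D' hD' hl => S E; case=> [[hs hv _] _ _ [_ ha]] /= hl.
rewrite /right_edge /= (nth_map (snap0 n)) ?hs //.
have := hv 0; have := hv (size E); rewrite hs ltnSn => /(_ isT) [_ wK _ _] /(_ isT) [_ w0 _ _].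
rewrite /read_line /cs /= -(edge_bwd w0 wK ha).
by move: hl; rewrite /left_edge /= => ->; rewrite es.
Qed.
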